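(* Let $P_1\subseteq P_2$ be meet semilattices with $0$ such that $P_1\subseteq P_2$ preserves finite covers and is tight, and let $Y=\bigcup_{x\in P_1}V^{P_2}_x\subseteq T(P_2)$. Then the image of $\mathcal T_c(P_1)$ in $\mathcal T_c(P_2)$ under $U\mapsto re^{-1}(U)$ is exactly the set of compact open subsets of $T(P_2)$ contained in $Y$.
   Context: A meet semilattice with $0$ is a meet semilattice with least element $0$; $P_1\subseteq P_2$ means an injective meet- and $0$-preserving map identifying $P_1$ with a subset of $P_2$. A filter of $P$ is a subset $F$ with $\emptyset\ne F\ne P$, closed upwards and under $\wedge$; $F(P)$ has the topology generated by $U_x=\{F:x\in F\}$, with basis of compact open sets $U_{(x:x_1,\dots,x_n)}=\{F:x\in F,\ x_1,\dots,x_n\notin F\}$. The tight filters $T(P)$ are the closure of the ultrafilters in $F(P)$; $V^P_{(x:x_1,\dots,x_n)}=U_{(x:x_1,\dots,x_n)}\cap T(P)$, $V^P_x=V^P_{(x:)}$. $\mathcal T_c(P)$ is the generalized Boolean algebra of compact open subsets of $T(P)$. A finite cover of $x\in P$ is a finite set of elements $\le x$ such that every $0\ne y\le x$ meets one of them nontrivially; $P_1\subseteq P_2$ preserves finite covers if every finite cover in $P_1$ of $x\in P_1$ is a finite cover of $x$ in $P_2$. In that case $re:T(P_2)\dashrightarrow T(P_1)$, $\xi\mapsto\xi\cap P_1$ (defined when nonempty), is a partial map to tight filters and $U\mapsto re^{-1}(U)$ is an injective generalized Boolean algebra morphism $\mathcal T_c(P_1)\to\mathcal T_c(P_2)$; $P_1\subseteq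 P_2$ is called tight if its image is an ideal (closed under unions and under intersection with arbitrary elements of $\mathcal T_c(P_2)$). *)

(* Defs.v *)
From HB Require Import structures.
From mathcomp Require Import all_boot all_order.
From mathcomp Require Import boolp classical_sets.
Set Implicit Arguments. Unset Strict Implicit. Unset Printing Implicit Defensive.
Import Order.Theory.
Local Open Scope classical_set_scope.
Local Open Scope order_scope.

Section Semilattice.
Context {d : Order.disp_t} (P : bMeetSemilatticeType d).

Definition is_filter (F : set P) : Prop :=
  [/\ F !=set0, F != setT,
      (forall x y : P, F x -> x <= y -> F y) &
      (forall x y : P, F x -> F y -> F (x `&` y))].

Definition is_ultrafilter (F : set P) : Prop :=
  is_filter F /\ forall G : set P, is_filter G -> F `<=` G -> G = F.

Definition basicU (x : P) (xs : seq P) : set (set P) :=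
  [set F | is_filter F /\ F x /\ forall y, y \in xs -> ~ F y].

(* Tight filters: closure in F(P) of the set of ultrafilters
   (tested against the basis U_{(x:x_1..x_n)}). *)
Definition is_tight (F : set P) : Prop :=
  is_filter F /\
  forall (x : P) (xs : seq P), basicU x xs F ->
    exists G, is_ultrafilter G /\ basicU x xs G.

Definition tight : set (set P) := [set F | is_tight F].

(* Open subsets of T(P) in the subspace topology. *)
Definition openT (O : set (set P)) : Prop :=
  O `<=` tight /\
  forall F, O F -> exists (x : P) (xs : seq P),
      basicU x xs F /\ (basicU x xs `&` tight) `<=` O.

Definition compactT (K : set (set P)) : Prop :=
  K `<=` tight /\
  forall C : set (set (set P)), (forall O, C O -> openT O) ->
    K `<=` \bigcup_(O in C) O ->
    exists (n : nat) (Os : nat -> set (set P)),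
      (forall i, (i < n)%N -> C (Os i)) /\
      (forall F, K F -> exists2 i, (i < n)%N & Os i F).

Definition Tc : set (set (set P)) := [set K | openT K /\ compactT K].

Definition finite_cover (x : P) (C : seq P) : Prop :=
  (forall c, c \in C -> c <= x) /\
  forall y : P, y != \bot -> y <= x -> exists2 c, c \in C & y `&` c != \bot.

End Semilattice.

Arguments tight {d} P _.
Arguments Tc {d} P _.

Section Inclusion.
Context {d1 d2 : Order.disp_t} (P1 : bMeetSemilatticeType d1)
        (P2 : bMeetSemilatticeType d2).

(* P1 ⊆ P2: injective meet- and 0-preserving map. *)
Definition semilattice_embedding (f : P1 -> P2) : Prop :=
  [/\ injective f, (forall x y, f (x `&` y) = f x `&` f y) & f \bot = \bot].

Definition preserves_finite_covers (f : P1 -> P2) : Prop :=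
  forall (x : P1) (C : seq P1), finite_cover x C -> finite_cover (f x) (map f C).

(* re^{-1}(U) = { xi in T(P2) | xi ∩ P1 is nonempty and lies in U },
   where xi ∩ P1 is the preimage f^{-1}(xi). *)
Definition re_inv (f : P1 -> P2) (U : set (set P1)) : set (set P2) :=
  [set xi | tight P2 xi /\ (f @^-1` xi) !=set0 /\ U (f @^-1` xi)].

(* Tight inclusion: the image of T_c(P1) is an ideal of T_c(P2). *)
Definition tight_inclusion (f : P1 -> P2) : Prop :=
  (forall U U', Tc P1 U -> Tc P1 U' ->
     exists2 U'', Tc P1 U'' & re_inv f U `|` re_inv f U' = re_inv f U'') /\
  (forall U W, Tc P1 U -> Tc P2 W ->
     exists2 U'', Tc P1 U'' & re_inv f U `&` W = re_inv f U'').

End Inclusion.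

(* Main.v *)
Require Import Defs.
From HB Require Import structures.
From mathcomp Require Import all_boot all_order.
From mathcomp Require Import boolp classical_sets.
Import Order.Theory.
Local Open Scope classical_set_scope.
Local Open Scope order_scope.

Section Gen.
Context {d : Order.disp_t} {P : bMeetSemilatticeType d}.

Lemma filter_bot {F : set P} : is_filter F -> ~ F \bot.
Proof.
case=> _ /eqP FT up _ Fb; apply: FT; apply/seteqP; split=> // y _.
exact: up Fb (le0x y).
Qed.

Lemma filter_up {F : set P} {x y} : is_filter F -> F x -> x <= y -> F y.
Proof. by case=> _ _ up _; exact: up. Qed.

Lemma filter_meet {F : set P} {x y} : is_filter F -> F x -> F y -> F (x `&` y).
Proof. by case=> _ _ _ mt; exact: mt. Qed.

Lemma filterP (F : set P) : (exists x, F x) -> ~ F \bot ->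
  (forall x y : P, F x -> x <= y -> F y) ->
  (forall x y : P, F x -> F y -> F (x `&` y)) -> is_filter F.
Proof.
move=> [x Fx] nb up mt; split=> //; first by exists x.
by apply/eqP => FT; apply: nb; rewrite FT.
Qed.

Lemma ult_char {G : set P} {y} : is_ultrafilter G -> ~ G y ->
  exists z, G z /\ z `&` y = \bot.
Proof.
move=> [fG maxG] nGy; apply: contrapT => hn.
pose H := [set w | exists z, G z /\ z `&` y <= w].
have fH : is_filter H.
  case: (fG) => -[z Gz] _ _ _.
  apply: filterP.
  - by exists (z `&` y); exists z; split.
  - move=> [w [Gw]]; rewrite lex0 => /eqP wy; apply: hn; by exists w.
  - move=> a b [z' [Gz' le1]] ab; exists z'; split=> //; exact: le_trans ab.
  - move=> a b [z1 [G1 l1]] [z2 [G2 l2]]; exists (z1 `&` z2); split.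
      exact: filter_meet.
    rewrite lexI; apply/andP; split.
      apply: le_trans l1; apply: leI2 => //; exact: leIl.
    apply: le_trans l2; apply: leI2 => //; exact: leIr.
have GH : G `<=` H by move=> z Gz; exists z; split=> //; exact: leIl.
have := maxG H fH GH => HG; apply: nGy; rewrite -HG.
case: (fG) => -[z Gz] _ _ _; exists z; split=> //; exact: leIr.
Qed.

Lemma ult_exists {y : P} : y != \bot -> exists G, is_ultrafilter G /\ G y.
Proof.
move=> ny.
pose Pz (A : set P) := [/\ ~ A \bot, (forall a b, A a -> a <= b -> A b),
   (forall a b, A a -> A b -> A (a `&` b)) & (A = set0 \/ A y)].
have [A [[Ab Aup Ame Ay] Amax]] : exists A, Pz A /\ forall B, A `<` B -> ~ Pz B.
  apply: Zorn_bigcup => FF FFP tot; split.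
  - by move=> [X FX Xb]; case: (FFP X FX) => nb _ _ _; exact: nb Xb.
  - move=> a b [X FX Xa] ab; exists X => //; case: (FFP X FX) => _ up _ _.
    exact: up Xa ab.
  - move=> a b [X FX Xa] [Y FY Yb].
    case: (tot X Y FX FY) => [XY|YX].
      exists Y => //; case: (FFP Y FY) => _ _ mt _; apply: mt => //; exact: XY.
    exists X => //; case: (FFP X FX) => _ _ mt _; apply: mt => //; exact: YX.
  - case: (pselect (exists2 X, FF X & X y)) => [[X FX Xy]|hn].
      by right; exists X.
    left; apply/seteqP; split=> // a [X FX Xa].
    case: (FFP X FX) => _ _ _ [X0|Xy]; first by rewrite X0 in Xa.
    by exfalso; apply: hn; exists X.
have Ay' : A y.
  case: Ay => // A0.
  exfalso; apply: (Amax [set w | y <= w]).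
    rewrite A0; split=> //; move/(_ y (lexx y)).
    by [].
  split.
  - by rewrite /= lex0 (negPf ny).
  - move=> a b ya ab; exact: le_trans ab.
  - by move=> a b ya yb; rewrite /= lexI ya yb.
  - right; exact: lexx.
have fA : is_filter A by apply: filterP => //; exists y.
exists A; split=> //; split=> // G fG AG.
apply: contrapT => GA; apply: (Amax G).
  split=> // GsA; apply: GA; apply/seteqP; split=> //.
split.
- exact: filter_bot.
- move=> a b; exact: filter_up.
- move=> a b; exact: filter_meet.
- by right; apply: AG.
Qed.

Lemma ult_meets_cover {G : set P} {x} {C : seq P} : is_ultrafilter G -> G x ->
  finite_cover x C -> exists2 c, c \in C & G c.
Proof.
move=> uG Gx [Cle Ccov]; apply: contrapT => hn.
have aux : forall C' : seq P, (forall c, c \in C' -> ~ G c) ->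
    exists z, [/\ G z, z <= x & forall c, c \in C' -> z `&` c = \bot].
  elim=> [|c C' IH] hc.
    by exists x; split.
  have [z [Gz zx zc]] := IH (fun c' hc' => hc c' (mem_behead (s:=c :: C') hc')).
  have [z' [Gz' z'c]] := ult_char uG (hc c (mem_head _ _)).
  exists (z `&` z'); split.
  - exact: filter_meet (uG.1) Gz Gz'.
  - exact: le_trans (leIl _ _) zx.
  - move=> c'; rewrite in_cons => /orP[/eqP ->|hc'].
      apply/eqP; rewrite -lex0 -z'c -meetA; exact: leIr.
    apply/eqP; rewrite -lex0 -(zc c' hc'); apply: leI2 (leIl _ _) (lexx _).
have [z [Gz zx zc]] := aux C (fun c hc Gc => hn (ex_intro2 _ _ c hc Gc)).
have nz : z != \bot by apply/eqP => z0; apply: (filter_bot uG.1); rewrite -z0.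
have [c hc] := Ccov z nz zx.
by rewrite zc // eqxx.
Qed.

Lemma no_ult_cover (x : P) (xs : seq P) :
  ~ (exists G, is_ultrafilter G /\ basicU x xs G) ->
  finite_cover x (map (fun y => x `&` y) xs).
Proof.
move=> hn; split.
  by move=> c /mapP[y _ ->]; exact: leIl.
move=> y ny yx; apply: contrapT => hc.
have [G [uG Gy]] := ult_exists ny.
apply: hn; exists G; split=> //; split; first exact: uG.1.
split; first exact: filter_up uG.1 Gy yx.
move=> z zxs Gz; apply: (filter_bot uG.1).
have : G (y `&` z) by exact: filter_meet uG.1 Gy Gz.
suff -> : y `&` z = \bot by [].
have : ~ (y `&` (x `&` z) != \bot).
  by move=> h; apply: hc; exists (x `&` z) => //; apply/mapP; exists z.
move/negP; rewrite negbK => /eqP <-.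
by rewrite meetA (meet_l yx).
Qed.

End Gen.

Definition covered {T : Type} (C : set (set T)) (S : set T) :=
  exists (n : nat) (Os : nat -> set T),
    (forall i, (i < n)%N -> C (Os i)) /\
    (forall F, S F -> exists2 i, (i < n)%N & Os i F).

Section Cov.
Context {T : Type} {C : set (set T)}.

Lemma covered_sub {S S' : set T} : S' `<=` S -> covered C S -> covered C S'.
Proof.
move=> sub [n [Os [hC hS]]]; exists n, Os; split=> // F /sub; exact: hS.
Qed.

Lemma covered_empty {S : set T} : (forall F, ~ S F) -> covered C S.
Proof. by move=> h; exists 0%N, (fun _ => set0); split=> // F /h. Qed.

Lemma covered_one {O S : set T} : C O -> S `<=` O -> covered C S.
Proof.
move=> CO SO; exists 1%N, (fun _ => O); split=> // F SF; exists 0%N => //.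
exact: SO.
Qed.

Lemma covered_union {S1 S2 : set T} :
  covered C S1 -> covered C S2 -> covered C (S1 `|` S2).
Proof.
move=> [n1 [O1 [h1 c1]]] [n2 [O2 [h2 c2]]].
exists (n1 + n2)%N, (fun i => if (i < n1)%N then O1 i else O2 (i - n1)%N).
split.
  move=> i lt; case: ifP => hi; first exact: h1.
  apply: h2; rewrite ltn_subLR //; by rewrite leqNgt hi.
move=> F [/c1[i hi Oi]|/c2[i hi Oi]].
  by exists i; [exact: ltn_addr|rewrite hi].
exists (n1 + i)%N; first by rewrite ltn_add2l.
by rewrite ltnNge leq_addr /= addKn.
Qed.

Lemma covered_fin (Q : nat -> set T) (n : nat) :
  (forall i, (i < n)%N -> covered C (Q i)) ->
  covered C [set F | exists2 i, (i < n)%N & Q i F].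
Proof.
elim: n => [|n IH] h.
  by apply: covered_empty => F [i].
apply: (@covered_sub ([set F | exists2 i, (i < n)%N & Q i F] `|` Q n)).
  move=> F [i hi Qi]; rewrite ltnS leq_eqVlt in hi.
  case/orP: hi => [/eqP Ei|hi]; first by right; rewrite -Ei.
  by left; exists i.
apply: covered_union; first by apply: IH => i hi; apply: h; exact: ltnW.
exact: h.
Qed.

End Cov.

Section Compact.
Context {d : Order.disp_t} {P : bMeetSemilatticeType d}.

Lemma compact_basic (x : P) (xs : seq P) : compactT (setI (basicU x xs) (tight P)).
Proof.
split; first by move=> F [].
move=> C Copen Kcov.
set K := setI (basicU x xs) (tight P).
apply: contrapT => ncov.
pose cyl (a b : seq P) := [set F : set P | (forall z, z \in a -> F z) /\
   (forall z, z \in b -> ~ F z)].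
pose Pz (D : set (bool * P)) := forall a b : seq P,
  (forall z, z \in a -> D (true, z)) -> (forall z, z \in b -> D (false, z)) ->
  ~ covered C (setI K (cyl a b)).
have Pz0 : Pz set0.
  move=> [|z a] [|w b] ha hb.
  - move=> cv; apply: ncov; apply: (covered_sub _ cv).
    by move=> F KF; split=> //; split.
  - by have := hb w (mem_head _ _).
  - by have := ha z (mem_head _ _).
  - by have := ha z (mem_head _ _).
have [D [PD Dmax]] : exists D, Pz D /\ forall B, D `<` B -> ~ Pz B.
  apply: Zorn_bigcup => FF FFP tot.
  have chain : forall s : seq (bool * P),
      (forall e, e \in s -> (\bigcup_(X in FF) X) e) ->
      exists X, (X = set0 \/ FF X) /\ forall e, e \in s -> X e.
    elim=> [|e s IH] hs; first by exists set0; split=> //; left.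
    have [X1 FX1 X1e] := hs e (mem_head _ _).
    have [X2 [hX2 X2s]] := IH (fun e' h => hs e' (mem_behead (s:=e::s) h)).
    case: hX2 => [X20|FX2].
      exists X1; split; first by right.
      move=> e'; rewrite in_cons => /orP[/eqP->//|h].
      by have := X2s e' h; rewrite X20.
    case: (tot X1 X2 FX1 FX2) => sub.
      exists X2; split; first by right.
      move=> e'; rewrite in_cons => /orP[/eqP->|h]; [exact: sub|exact: X2s].
    exists X1; split; first by right.
    move=> e'; rewrite in_cons => /orP[/eqP->//|h]; apply: sub; exact: X2s.
  move=> a b ha hb.
  have hs : forall e, e \in [seq (true, z) | z <- a] ++ [seq (false, z) | z <- b] ->
      (\bigcup_(X in FF) X) e.
    move=> e; rewrite mem_cat => /orP[]/mapP[z hz ->]; [exact: ha|exact: hb].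
  have [X [hX Xs]] := chain _ hs.
  have PX : Pz X by case: hX => [->//|/FFP].
  apply: PX => z hz; apply: Xs; rewrite mem_cat; apply/orP;
    [left|right]; apply/mapP; by exists z.
have ex : forall a b, (forall z, z \in a -> D (true, z)) ->
    (forall z, z \in b -> D (false, z)) -> exists G, K G /\ cyl a b G.
  move=> a b ha hb; apply: contrapT => hn; apply: (PD a b ha hb).
  apply: covered_empty => G [KG cG]; apply: hn; by exists G.
have totD : forall z, D (true, z) \/ D (false, z).
  move=> z; apply: contrapT => /not_orP [nt nf].
  have nP1 : ~ Pz (D `|` [set (true, z)]).
    apply: Dmax; split; first by move=> e De; left.
    by move=> sub; apply: nt; apply: sub; right.
  have nP2 : ~ Pz (D `|` [set (false, z)]).
    apply: Dmax; split; first by move=> e De; left.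
    by move=> sub; apply: nf; apply: sub; right.
  apply: nP1 => a1 b1 ha1 hb1 cov1.
  apply: nP2 => a2 b2 ha2 hb2 cov2.
  apply: (PD [seq w <- a1 ++ a2 | w != z] [seq w <- b1 ++ b2 | w != z]).
  - move=> w; rewrite mem_filter mem_cat => /andP[wz /orP[h|h]].
      by case: (ha1 w h) => // -[] wz'; rewrite wz' eqxx in wz.
    by case: (ha2 w h).
  - move=> w; rewrite mem_filter mem_cat => /andP[wz /orP[h|h]].
      by case: (hb1 w h).
    by case: (hb2 w h) => // -[] wz'; rewrite wz' eqxx in wz.
  apply: (covered_sub _ (covered_union cov1 cov2)).
  move=> F [KF [Fa Fb]]; case: (pselect (F z)) => Fz; [left|right];
    split=> //; split.
  - move=> w h; case: (eqVneq w z) => [->//|wz]; apply: Fa.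
    by rewrite mem_filter wz mem_cat h.
  - move=> w h; case: (eqVneq w z) => [ewz|wz].
      by case: (hb1 w h) => [|[]]; rewrite ewz.
    by apply: Fb; rewrite mem_filter wz mem_cat h.
  - move=> w h; case: (eqVneq w z) => [ewz|wz].
      by case: (ha2 w h) => [|[]]; rewrite ewz.
    by apply: Fa; rewrite mem_filter wz mem_cat h orbT.
  - move=> w h; case: (eqVneq w z) => [->//|wz]; apply: Fb.
    by rewrite mem_filter wz mem_cat h orbT.
pose F0 := [set z | D (true, z)].
have nF : forall z, ~ F0 z -> D (false, z) by move=> z nz; case: (totD z).
have ex' : forall a b, (forall z, z \in a -> F0 z) ->
    (forall z, z \in b -> ~ F0 z) -> exists G, K G /\ cyl a b G.
  move=> a b ha hb; apply: ex => // z hz; apply: nF; exact: hb.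
have F0x : F0 x.
  apply: contrapT => nx.
  have [G [[[fG [Gx _]] _] [_ hb]]] := ex' [::] [:: x] (fun z h => ltac:(done))
    (fun z h => ltac:(by move: h; rewrite inE => /eqP->)).
  exact: hb x (mem_head _ _) Gx.
have fF0 : is_filter F0.
  apply: filterP; first by exists x.
  - move=> F0b.
    have [G [[[fG _] _] [ha _]]] := ex' [:: \bot] [::]
      (fun z h => ltac:(by move: h; rewrite inE => /eqP->)) (fun z h => ltac:(done)).
    exact: (filter_bot fG) (ha _ (mem_head _ _)).
  - move=> a b Fa ab; apply: contrapT => nFb.
    have [G [[[fG _] _] [ha hb]]] := ex' [:: a] [:: b]
      (fun z h => ltac:(by move: h; rewrite inE => /eqP->))
      (fun z h => ltac:(by move: h; rewrite inE => /eqP->)).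
    exact: hb b (mem_head _ _) (filter_up fG (ha _ (mem_head _ _)) ab).
  - move=> a b Fa Fb; apply: contrapT => nFab.
    have [G [[[fG _] _] [ha hb]]] := ex' [:: a; b] [:: a `&` b]
      (fun z h => ltac:(by move: h; rewrite !inE => /orP[]/eqP->))
      (fun z h => ltac:(by move: h; rewrite inE => /eqP->)).
    apply: hb (a `&` b) (mem_head _ _) _; apply: filter_meet fG _ _.
      by apply: ha; rewrite !inE eqxx.
    by apply: ha; rewrite !inE eqxx orbT.
have KF0 : K F0.
  split; first split=> //; first split=> //.
    move=> w hw F0w.
    have [G [[[fG [_ nxs]] _] [ha _]]] := ex' [:: w] [::]
      (fun z h => ltac:(by move: h; rewrite inE => /eqP->)) (fun z h => ltac:(done)).
    exact: nxs w hw (ha _ (mem_head _ _)).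
  split=> // y ys [_ [F0y nys]].
  have [G [[_ tG] [ha hb]]] := ex' [:: y] ys
    (fun z h => ltac:(by move: h; rewrite inE => /eqP->)) nys.
  apply: tG.2; split; first exact: tG.1.
  split; [exact: ha _ (mem_head _ _)|exact: hb].
have [O CO OF0] := Kcov F0 KF0.
have [_ oh] := Copen O CO.
have [y [ys [[_ [F0y nys]] hsub]]] := oh F0 OF0.
apply: (PD [:: y] ys).
- by move=> z; rewrite inE => /eqP->.
- move=> z hz; apply: nF; exact: nys.
apply: (covered_one CO) => G [[[fG _] tG] [ha hb]]; apply: hsub; split=> //.
split=> //; split; [exact: ha _ (mem_head _ _)|exact: hb].
Qed.

End Compact.

Section Basic.
Context {d : Order.disp_t} {P : bMeetSemilatticeType d}.

Lemma Tc_basic (x : P) (xs : seq P) : Tc P (setI (basicU x xs) (tight P)).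
Proof.
split; last exact: compact_basic.
split; first by move=> F [].
by move=> F [bF tF]; exists x, xs; split.
Qed.

Lemma Tc_empty : Tc P set0.
Proof.
split; first by split=> // F.
split; first by move=> F.
move=> C _ _; by apply: covered_empty => F.
Qed.

End Basic.

Section Main.
Context {d1 d2 : Order.disp_t} {P1 : bMeetSemilatticeType d1}
        {P2 : bMeetSemilatticeType d2} (f : P1 -> P2)
        (hf : semilattice_embedding f) (hcov : preserves_finite_covers f).

Lemma emb_mono {x y : P1} : x <= y -> f x <= f y.
Proof.
case: hf => _ hm _; move/meet_idPl => e; apply/meet_idPl; by rewrite -hm e.
Qed.

Lemma re_filter (xi : set P2) : is_filter xi -> (exists x, xi (f x)) ->
  is_filter (f @^-1` xi).
Proof.
move=> fx [x hx]; case: hf => _ hm hb.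
apply: filterP; first by exists x.
- by rewrite /preimage /= hb; exact: filter_bot fx.
- move=> a b; rewrite /preimage /= => ha ab.
  exact: filter_up fx ha (emb_mono ab).
- move=> a b; rewrite /preimage /= => ha hb'; rewrite hm; exact: filter_meet fx ha hb'.
Qed.

Lemma re_tight (xi : set P2) : tight P2 xi -> (exists x, xi (f x)) ->
  tight P1 (f @^-1` xi).
Proof.
move=> [fx tx] ne; split; first exact: re_filter.
move=> x xs [_ [hx hxs]]; apply: contrapT => hn.
have cov := hcov _ _ (no_ult_cover x xs hn).
have [G [uG [fG [Gfx Gn]]]] : exists G, is_ultrafilter G /\ basicU (f x) (map f xs) G.
  apply: tx; split=> //; split=> // y /mapP[z hz ->]; exact: hxs.
have [c /mapP[w /mapP[z hz ->] ->] Gc] := ult_meets_cover uG Gfx cov.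
apply: (Gn (f z)); first by apply/mapP; exists z.
apply: filter_up fG Gc _; apply: emb_mono; exact: leIr.
Qed.

Lemma re_inv_basic (x : P1) (xs : seq P1) :
  re_inv f (setI (basicU x xs) (tight P1)) =
  setI (basicU (f x) (map f xs)) (tight P2).
Proof.
apply/seteqP; split.
  move=> xi [txi [ne [[_ [hx hxs]] _]]]; split=> //; split; first exact: txi.1.
  split=> // y /mapP[z hz ->]; exact: hxs.
move=> xi [[fxi [hx hxs]] txi]; split=> //.
have ne : exists x, xi (f x) by exists x.
split; first exact: ne.
split; last exact: re_tight.
split; first exact: re_filter.
split=> // z hz; apply: hxs; apply/mapP; by exists z.
Qed.

End Main.

Theorem mainTheorem11 (d1 d2 : Order.disp_t)
  (P1 : bMeetSemilatticeType d1) (P2 : bMeetSemilatticeType d2)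
  (f : P1 -> P2)
  (hf : semilattice_embedding f)
  (hcov : preserves_finite_covers f)
  (htight : tight_inclusion f) :
  let Y : set (set P2) := [set xi | tight P2 xi /\ exists x : P1, xi (f x)] in
  forall W : set (set P2),
    (exists2 U, Tc P1 U & W = re_inv f U) <-> (Tc P2 W /\ W `<=` Y).
Proof.
move=> Y W; split.
- case=> U [oU cU] ->; split; last first.
    by move=> xi [txi [[x hx] _]]; split=> //; exists x.
  split.
    split; first by move=> xi [].
    move=> xi [txi [ne Ueta]].
    have [y [ys [[feta [hy hys]] hsub]]] := oU.2 _ Ueta.
    exists (f y), (map f ys); split.
      split; first exact: txi.1.
      split=> // z /mapP[w hw ->]; exact: hys.
    move=> xi' hxi'.
    have : setI (basicU (f y) (map f ys)) (tight P2) xi' by [].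
    rewrite -(re_inv_basic f hf hcov) => -[t [ne' h]].
    by split=> //; split=> //; apply: hsub.
  split; first by move=> xi [].
  move=> C Copen cov.
  pose C1 := [set O : set (set P1) | exists y ys,
    O = setI (basicU y ys) (tight P1) /\ O `<=` U].
  have [n [Os [hC hc]]] : covered C1 U.
    apply: cU.2.
      by move=> O [y [ys [-> _]]]; exact: (Tc_basic y ys).1.
    move=> eta Ueta; have [y [ys [beta hsub]]] := oU.2 _ Ueta.
    exists (setI (basicU y ys) (tight P1)).
      by exists y, ys; split.
    by split=> //; exact: oU.1.
  apply: (covered_sub _ (@covered_fin _ C (fun i => re_inv f (Os i)) n _)).
    move=> xi [txi [ne Ueta]]; have [i hi Oi] := hc _ Ueta.
    by exists i => //; split=> //; split.
  move=> i hi; have [y [ys [eO sO]]] := hC i hi; rewrite eO (re_inv_basic f hf hcov).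
  apply: (compact_basic (f y) (map f ys)).2; first exact: Copen.
  move=> xi hxi; apply: cov.
  move: hxi; rewrite -(re_inv_basic f hf hcov) => -[t [ne' h]].
  split=> //; split=> //; apply: sO; by rewrite eO.
- case=> -[oW cW] WY.
  pose C2 := [set O : set (set P2) | exists x : P1,
    O = setI (basicU (f x) [::]) (tight P2)].
  have [n [Os [hC hc]]] : covered C2 W.
    apply: cW.2.
      by move=> O [x ->]; exact: (Tc_basic (f x) [::]).1.
    move=> xi Wxi; have [txi [x hx]] := WY _ Wxi.
    exists (setI (basicU (f x) [::]) (tight P2)); first by exists x.
    by split=> //; split; first exact: txi.1.
  have claim : forall m, (m <= n)%N -> exists2 U, Tc P1 U &
      re_inv f U = setI W [set xi | exists2 i, (i < m)%N & Os i xi].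
    elim=> [|m IH] hm.
      exists set0; first exact: Tc_empty.
      by apply/seteqP; split=> [xi [_ [_ []]]|xi [_ []]].
    have [U TcU eU] := IH (ltnW hm).
    have [x Em] := hC m hm.
    have [U' TcU' eU'] := htight.2 _ W (Tc_basic x [::]) (conj oW cW).
    have [U'' TcU'' e''] := htight.1 U U' TcU TcU'.
    exists U'' => //.
    change (setU (re_inv f U) (re_inv f U') = re_inv f U'') in e''.
    change (setI (re_inv f (setI (basicU x [::]) (tight P1))) W = re_inv f U') in eU'.
    rewrite -e'' eU -eU' (re_inv_basic f hf hcov) /=.
    apply/seteqP; split.
      move=> xi [[Wxi [i hi Oi]]|[Oxi Wxi]]; split=> //.
        by exists i => //; exact: ltnW.
      by exists m => //; rewrite Em.
    move=> xi [Wxi [i hi Oi]].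
    rewrite ltnS leq_eqVlt in hi; case/orP: hi => [/eqP Ei|hi].
      by right; split=> //; rewrite -Em -Ei.
    by left; split=> //; exists i.
  have [U TcU eU] := claim n (leqnn n).
  exists U => //; rewrite eU; apply/seteqP; split.
    by move=> xi Wxi; split=> //; exact: hc.
  by move=> xi [].
Qed.
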